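(* Let $F:\mathbb{R}_{\ge0}\to\mathbb{R}_{>0}$ be differentiable with $f=F'$ satisfying $f(x)<0$ for all $x$, and $\lim_{x\to\infty}F(x)=0$. Assume that for every $a\in(0,1)$ the limits $\lim_{x\to\infty}\frac{F(x)}{F(ax)}$ and $\lim_{x\to\infty}\frac{f(x)}{f(ax)}$ exist (in the extended reals). Let $g(x)=-\ln F(x)$. If $g'(x)\in\omega(1/x)$, i.e. $\lim_{x\to\infty}x\,g'(x)=\infty$, then $\lim_{x\to\infty}\frac{f(x)}{f(ax)}=0$ for every $a\in(0,1)$. *)

(* Defs.v *)
From Stdlib Require Import Reals.
From Coquelicot Require Export Coquelicot.
Open Scope R_scope.

Definition deriv_on_nonneg (F f : R -> R) : Prop :=
  (forall x, 0 < x -> is_derive F x (f x)) /\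
  filterlim (fun h => (F h - F 0) / h) (at_right 0) (locally (f 0)).

(* Main.v *)
Require Import Defs.
From Stdlib Require Import Reals Lra Psatz.
From Coquelicot Require Import Coquelicot.
Open Scope R_scope.

Lemma is_derive_val (f : R -> R) x l l' : is_derive f x l -> l = l' -> is_derive f x l'.
Proof. intros H ->; exact H. Qed.

Lemma derive_lin (a t : R) : is_derive (fun y => a * y) t a.
Proof. auto_derive; [trivial | ring]. Qed.

Lemma deriv_comp_a (F f : R -> R) a t :
  is_derive F (a * t) (f (a * t)) -> is_derive (fun y => F (a * y)) t (a * f (a * t)).
Proof.
  intros H. eapply is_derive_val. apply (is_derive_comp F (fun y => a * y)).
  exact H. apply derive_lin. reflexivity.
Qed.

Lemma deriv_g (F f : R -> R) t :
  is_derive F t (f t) -> 0 < F t ->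
  is_derive (fun y => - ln (F y)) t (- (f t / F t)).
Proof.
  intros H HF.
  pose proof (is_derive_comp ln F t (/ F t) (f t) (is_derive_ln _ HF) H) as H2.
  pose proof (is_derive_scal _ _ (-1) _ H2) as H3.
  unfold scal in H3; simpl in H3; unfold mult in H3; simpl in H3.
  replace (- (f t / F t)) with (-1 * (f t * / F t)) by (unfold Rdiv; ring).
  revert H3. apply is_derive_ext. intros; simpl; ring.
Qed.

Lemma key (F f : R -> R)
  (Fpos : forall x, 0 <= x -> 0 < F x)
  (Fd : forall x, 0 < x -> is_derive F x (f x))
  (fneg : forall x, 0 <= x -> f x < 0)
  (Flim : is_lim F p_infty 0)
  (gfast : is_lim (fun x => x * Derive (fun y => - ln (F y)) x) p_infty p_infty)
  a (Ha : 0 < a < 1) c (Hc : 0 < c) N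
  (HN : forall t, N < t -> c < f t / f (a * t)) : False.
Proof.
  assert (lna : ln a < 0) by (rewrite <- ln_1; apply ln_increasing; lra).
  set (K := (ln (c / a) - 1) / ln a).
  apply is_lim_spec in gfast. destruct (gfast K) as [N1 HN1].
  set (M0 := Rmax 1 (Rmax (Rabs N) (Rabs N1))).
  assert (HM0 : 1 <= M0 /\ Rabs N <= M0 /\ Rabs N1 <= M0).
  { unfold M0. pose proof (Rmax_l 1 (Rmax (Rabs N) (Rabs N1))).
    pose proof (Rmax_r 1 (Rmax (Rabs N) (Rabs N1))).
    pose proof (Rmax_l (Rabs N) (Rabs N1)). pose proof (Rmax_r (Rabs N) (Rabs N1)).
    lra. }
  assert (N <= Rabs N) by apply Rle_abs.
  assert (N1 <= Rabs N1) by apply Rle_abs.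
  set (x := (M0 + 1) / a).
  assert (Hax : a * x = M0 + 1) by (unfold x; field; lra).
  assert (Hxax : a * x < x).
  { rewrite Hax. unfold x. apply (Rmult_lt_reg_l a); [lra|]. field_simplify; nra. }
  assert (HB : c / a * F (a * x) <= F x).
  { set (psi := fun t => c / a * F (a * t) - F t).
    assert (Hinc : forall u v, Rmax 0 N < u -> u < v -> psi u < psi v).
    { intros u v Hu Huv.
      apply (incr_function psi (Finite (Rmax 0 N)) p_infty
                (fun t => c / a * (a * f (a * t)) - f t)); auto.
      - intros t Ht _. simpl in Ht.
        assert (0 < t) by (eapply Rle_lt_trans; [apply Rmax_l|exact Ht]).
        unfold psi. eapply is_derive_val.
        apply (is_derive_minus (fun t => c / a * F (a * t)) F).
        apply is_derive_scal. apply deriv_comp_a. apply Fd. nra. apply Fd. lra.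
        unfold minus, plus, opp; simpl. ring.
      - intros t Ht _. simpl in Ht.
        assert (0 < t) by (eapply Rle_lt_trans; [apply Rmax_l|exact Ht]).
        assert (N < t) by (eapply Rle_lt_trans; [apply Rmax_r|exact Ht]).
        specialize (HN t H2).
        assert (fa : f (a * t) < 0) by (apply fneg; nra).
        set (r := f t / f (a * t)) in HN.
        assert (f t = r * f (a * t)) by (unfold r; field; lra).
        replace (c / a * (a * f (a * t))) with (c * f (a * t)) by (field; lra).
        nra.
      - exact I. }
    destruct (Rle_lt_dec (c / a * F (a * x)) (F x)) as [Hle|Hlt]; [exact Hle|].
    exfalso.
    assert (Hp : 0 < psi x) by (unfold psi; lra).
    assert (Hca : 0 < c / a) by (apply Rdiv_lt_0_compat; lra).
    apply is_lim_spec in Flim.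
    assert (He : 0 < psi x / (2 * (c / a))) by (apply Rdiv_lt_0_compat; lra).
    destruct (Flim (mkposreal _ He)) as [M HM]. simpl in HM.
    set (y := Rmax x (Rabs M / a) + 1).
    assert (x <= Rmax x (Rabs M / a)) by apply Rmax_l.
    assert (Rabs M / a <= Rmax x (Rabs M / a)) by apply Rmax_r.
    assert (M <= Rabs M) by apply Rle_abs.
    assert (Hay : M < a * y).
    { unfold y. assert (a * (Rabs M / a) = Rabs M) by (field; lra). nra. }
    specialize (HM _ Hay). rewrite Rminus_0_r in HM.
    assert (0 < x) by (unfold x; apply Rdiv_lt_0_compat; lra).
    assert (Fy : 0 < F y) by (apply Fpos; unfold y; lra).
    assert (Fay : 0 < F (a * y)) by (apply Fpos; unfold y; nra).
    rewrite Rabs_pos_eq in HM by lra.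
    assert (Hxy : psi x < psi y).
    { apply Hinc. assert (Rmax 0 N <= M0).
      { apply Rmax_lub; lra. }
      lra. unfold y; lra. }
    unfold psi in Hxy at 2.
    assert (c / a * F (a * y) < c / a * (psi x / (2 * (c / a)))) by
      (apply Rmult_lt_compat_l; lra).
    replace (c / a * (psi x / (2 * (c / a)))) with (psi x / 2) in H5 by (field; lra).
    lra. }
  assert (HC : ln (F x) - ln (F (a * x)) < K * ln a).
  { set (h := fun t => - ln (F t) - K * ln t).
    assert (Hh : h (a * x) < h x).
    { apply (incr_function h (Finite (Rmax 0 N1)) p_infty
                (fun t => - (f t / F t) - K * / t)); simpl.
      - intros t Ht _.
        assert (0 < t) by (eapply Rle_lt_trans; [apply Rmax_l|exact Ht]).
        unfold h. eapply is_derive_val.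
        apply (is_derive_minus (fun t => - ln (F t)) (fun t => K * ln t)).
        apply deriv_g. apply Fd; lra. apply Fpos; lra.
        apply is_derive_scal. apply is_derive_ln. lra.
        unfold minus, plus, opp; simpl. ring.
      - intros t Ht _.
        assert (0 < t) by (eapply Rle_lt_trans; [apply Rmax_l|exact Ht]).
        assert (N1 < t) by (eapply Rle_lt_trans; [apply Rmax_r|exact Ht]).
        specialize (HN1 t H2).
        assert (Hd : Derive (fun y => - ln (F y)) t = - (f t / F t)).
        { apply is_derive_unique. apply deriv_g. apply Fd; lra. apply Fpos; lra. }
        rewrite Hd in HN1.
        set (q := - (f t / F t)) in *.
        assert (t * / t = 1) by (field; lra).
        assert (0 < / t) by (apply Rinv_0_lt_compat; lra).
        replace (q - K * / t) with ((t * q - K) * / t) by (field; lra).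
        apply Rmult_lt_0_compat; lra.
      - rewrite Hax. apply Rmax_lub_lt; lra.
      - exact Hxax.
      - exact I. }
    unfold h in Hh. rewrite ln_mult in Hh by (lra || (unfold x; apply Rdiv_lt_0_compat; lra)).
    lra. }
  assert (0 < x) by (unfold x; apply Rdiv_lt_0_compat; lra).
  assert (Fx : 0 < F x) by (apply Fpos; lra).
  assert (Fax : 0 < F (a * x)) by (apply Fpos; nra).
  assert (Hca : 0 < c / a) by (apply Rdiv_lt_0_compat; lra).
  apply ln_le in HB; [|nra].
  rewrite ln_mult in HB by lra.
  assert (K * ln a = ln (c / a) - 1) by (unfold K; field; lra).
  lra.
Qed.

Theorem lemma2 (F f : R -> R)
  (Fpos : forall x, 0 <= x -> 0 < F x)
  (Fdiff : deriv_on_nonneg F f)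
  (fneg : forall x, 0 <= x -> f x < 0)
  (Flim : is_lim F p_infty 0)
  (Fratio : forall a, 0 < a < 1 ->
     exists l : Rbar, is_lim (fun x => F x / F (a * x)) p_infty l)
  (fratio : forall a, 0 < a < 1 ->
     exists l : Rbar, is_lim (fun x => f x / f (a * x)) p_infty l)
  (gfast : is_lim (fun x => x * Derive (fun y => - ln (F y)) x) p_infty p_infty) :
  forall a, 0 < a < 1 -> is_lim (fun x => f x / f (a * x)) p_infty 0.
Proof.
  intros a Ha. destruct Fdiff as [Fd _].
  assert (pos : forall t, 0 <= t -> 0 < f t / f (a * t)).
  { intros t Ht. assert (f t < 0) by auto. assert (f (a * t) < 0) by (apply fneg; nra).
    assert (/ f (a * t) < 0) by (apply Rinv_lt_0_compat; lra).
    unfold Rdiv; nra. }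
  destruct (fratio a Ha) as [L HL].
  pose proof HL as HL'. apply is_lim_spec in HL'.
  destruct L as [l| |]; simpl in HL'.
  - destruct (total_order_T l 0) as [[Hl|Hl]|Hl].
    + exfalso. assert (He : 0 < - l) by lra.
      destruct (HL' (mkposreal _ He)) as [M HM]; simpl in HM.
      specialize (HM (Rmax M 0 + 1) ltac:(pose proof (Rmax_l M 0); lra)).
      specialize (pos (Rmax M 0 + 1) ltac:(pose proof (Rmax_r M 0); lra)).
      apply Rabs_def2 in HM. lra.
    + subst. exact HL.
    + exfalso. assert (He : 0 < l / 2) by lra.
      destruct (HL' (mkposreal _ He)) as [M HM]; simpl in HM.
      apply (key F f Fpos Fd fneg Flim gfast a Ha (l/2) He M).
      intros t Ht. specialize (HM t Ht). apply Rabs_def2 in HM. lra.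
  - exfalso. destruct (HL' 1) as [M HM].
    apply (key F f Fpos Fd fneg Flim gfast a Ha 1 Rlt_0_1 M). exact HM.
  - exfalso. destruct (HL' 0) as [M HM].
    specialize (HM (Rmax M 0 + 1) ltac:(pose proof (Rmax_l M 0); lra)).
    specialize (pos (Rmax M 0 + 1) ltac:(pose proof (Rmax_r M 0); lra)).
    lra.
Qed.
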